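(* Let $X\subset\mathbb{R}^n$ be a nonempty compact convex set with diameter $D_X:=\max_{x,y\in X}\|x-y\|$ (Euclidean norm). Let $u\in X$, $g\in\mathbb{R}^n$, $\beta>0$, $\eta>0$, $\phi(x):=\langle g,x\rangle+\frac{\beta}{2}\|x-u\|^2$, and consider the ACGM procedure described in the context. Then, if the procedure terminates with output $u^+$, $$\max_{x\in X}\langle\nabla\phi(u^+),u^+-x\rangle\le\eta .$$ Moreover, if $\delta^t=\sigma\beta D_X^2/t$ for some $\sigma\ge0$ and $\alpha^t$ is chosen such that $$\phi(u^t)\le\phi\Big(\frac{t-1}{t+1}u^{t-1}+\frac{2}{t+1}v^t\Big)$$ for every $t$, then for any $t\ge1$ (for which $v^{t+1}$ is computed) $$\min_{j=1,\dots,t+1}\langle\nabla\phi(u^{j-1}),u^{j-1}-v^j\rangle\le\min_{j=1,\dots,t+1}\max_{x\in X}\langle\nabla\phi(u^{j-1}),u^{j-1}-x\rangle\le\frac{6(\sigma+1)\beta D_X^2}{t},$$ and the ACGM procedure terminates after at most $T:=1+\big\lceil (7\sigma+6)\beta D_X^2/\eta\big\rceil$ iterations.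
   Context: Note $\nabla\phi(x)=g+\beta(x-u)$. ACGM (approximate conditional gradient method) procedure for $\min_{x\in X}\phi(x)$, with input $u,g,\beta,\eta$ and a sequence of tolerances $\delta^t\ge0$: set $u^0:=u$. For $t=1,2,\dots$ (iteration $t$): compute $v^t\in X$ such that $\langle\nabla\phi(u^{t-1}),v^t-x\rangle\le\delta^t$ for all $x\in X$ (an approximate solution of the linear subproblem $\min_{x\in X}\langle\nabla\phi(u^{t-1}),x\rangle$). If $\langle\nabla\phi(u^{t-1}),u^{t-1}-v^t\rangle\le\eta-\delta^t$, stop and output $u^+:=u^{t-1}$. Otherwise set $u^t:=(1-\alpha^t)u^{t-1}+\alpha^t v^t$ with some step size $\alpha^t\in[0,1]$, and continue. *)

(* Defs.v *)
From HB Require Import structures.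
From mathcomp Require Import all_boot all_order all_algebra.
From mathcomp Require Import all_classical all_reals all_analysis.
Set Implicit Arguments. Unset Strict Implicit. Unset Printing Implicit Defensive.
Import Order.TTheory GRing.Theory Num.Theory.
Import numFieldNormedType.Exports.
Local Open Scope classical_set_scope.
Local Open Scope ring_scope.

Section ACGM.
Variables (R : realType) (n : nat).
Implicit Types (x y : 'rV[R]_n) (X : set 'rV[R]_n).

Definition dot x y : R := \sum_(i < n) x ord0 i * y ord0 i.
Definition enorm x : R := Num.sqrt (dot x x).

(* diameter D_X := max_{x,y in X} ||x - y|| (a max, attained for compact X) *)
Definition diam X : R :=
  sup [set r | exists x y, [/\ X x, X y & r = enorm (x - y)]].

Definition phi (u g : 'rV[R]_n) (beta : R) x : R :=
  dot g x + beta / 2 * enorm (x - u) ^+ 2.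
Definition gradphi (u g : 'rV[R]_n) (beta : R) x : 'rV[R]_n :=
  g + beta *: (x - u).

Definition maxgap X (d w : 'rV[R]_n) : R :=
  sup [set dot d (w - x) | x in X].

(* quantity tested in the stopping rule at iteration t >= 1 *)
Definition acgm_gap u g beta (uu vv : nat -> 'rV[R]_n) (t : nat) : R :=
  dot (gradphi u g beta (uu t.-1)) (uu t.-1 - vv t).

Definition acgm_stops u g beta eta (de : nat -> R) uu vv (t : nat) : Prop :=
  acgm_gap u g beta uu vv t <= eta - de t.

Definition acgm_reached u g beta eta de uu vv (t : nat) : Prop :=
  (1 <= t)%N /\ forall s, (1 <= s)%N -> (s < t)%N -> ~ acgm_stops u g beta eta de uu vv s.

Definition acgm_run X u g beta eta (de al : nat -> R) (uu vv : nat -> 'rV[R]_n) : Prop :=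
  [/\ uu 0%N = u,
      forall t, (1 <= t)%N -> 0 <= de t,
      forall t, acgm_reached u g beta eta de uu vv t ->
        X (vv t) /\
        forall x, X x -> dot (gradphi u g beta (uu t.-1)) (vv t - x) <= de t
    & forall t, acgm_reached u g beta eta de uu vv t ->
        ~ acgm_stops u g beta eta de uu vv t ->
        [/\ 0 <= al t, al t <= 1 &
            uu t = (1 - al t) *: uu t.-1 + al t *: vv t]].

End ACGM.

(* Main.v *)
Require Import Defs.
From HB Require Import structures.
From mathcomp Require Import all_boot all_order all_algebra.
From mathcomp Require Import all_classical all_reals all_analysis.
From mathcomp Require Import ring lra zify.
Import Order.TTheory GRing.Theory Num.Theory.
Import numFieldNormedType.Exports.
Local Open Scope classical_set_scope.
Local Open Scope ring_scope.

Lemma dot_ge0 {R : realType} {n : nat} (x : 'rV[R]_n) : 0 <= dot x x.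
Proof. by apply: sumr_ge0 => i _; rewrite -expr2 sqr_ge0. Qed.

Lemma enorm_sq {R : realType} {n : nat} (x : 'rV[R]_n) : enorm x ^+ 2 = dot x x.
Proof. by rewrite /enorm sqr_sqrtr // dot_ge0. Qed.

Lemma enorm_ge0 {R : realType} {n : nat} (x : 'rV[R]_n) : 0 <= enorm x.
Proof. by rewrite /enorm sqrtr_ge0. Qed.

Lemma Qid {R : realType} {n : nat} (u g : 'rV[R]_n) (beta : R) (x y : 'rV[R]_n) :
  dot (gradphi u g beta y) (y - x) =
  phi u g beta y - phi u g beta x + beta / 2 * dot (x - y) (x - y).
Proof.
rewrite /phi !enorm_sq /gradphi /dot !mulr_sumr -!big_split /= -sumrN -!big_split /=.
apply: eq_bigr => i _; by rewrite !mxE; field.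
Qed.

Lemma phi_step {R : realType} {n : nat} (u g : 'rV[R]_n) (beta a b : R) (p v : 'rV[R]_n) :
  a = 1 - b ->
  phi u g beta (a *: p + b *: v) =
  phi u g beta p - b * dot (gradphi u g beta p) (p - v) + beta / 2 * b ^+ 2 * dot (v - p) (v - p).
Proof.
move=> ->.
rewrite /phi !enorm_sq /gradphi /dot !mulr_sumr -!big_split /= -sumrN -!big_split /=.
apply: eq_bigr => i _; by rewrite !mxE; field.
Qed.

Lemma dot_split {R : realType} {n : nat} (d w v x : 'rV[R]_n) :
  dot d (w - x) = dot d (w - v) + dot d (v - x).
Proof. by rewrite /dot -big_split /=; apply: eq_bigr => i _; rewrite !mxE; ring. Qed.

Lemma dot_zero {R : realType} {n : nat} (d w : 'rV[R]_n) :
  dot w w <= 0 -> dot d w = 0.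
Proof.
move=> h.
have h0 : dot w w = 0 by apply/eqP; rewrite eq_le h; apply: sumr_ge0 => i _; rewrite -expr2 sqr_ge0.
have wi : forall i, w ord0 i = 0.
  move=> i.
  have := @psumr_eq0P _ _ predT (fun i => w ord0 i * w ord0 i).
  move=> /(_ (fun i _ => sqr_ge0 (w ord0 i))) /(_ h0 i isT) /eqP.
  by rewrite mulf_eq0 orbb => /eqP.
by rewrite /dot big1 // => i _; rewrite wi mulr0.
Qed.

Lemma maxgap_le {R : realType} {n : nat} {X : set 'rV[R]_n} {d w : 'rV[R]_n} {b : R} :
  X !=set0 -> (forall x, X x -> dot d (w - x) <= b) -> maxgap X d w <= b.
Proof.
move=> [x0 X0] h; apply: ge_sup; first by exists (dot d (w - x0)), x0.
by move=> r [x Xx <-]; apply: h.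
Qed.

Lemma maxgap_ge {R : realType} {n : nat} {X : set 'rV[R]_n} {d w : 'rV[R]_n} {b : R} {x0} :
  (forall x, X x -> dot d (w - x) <= b) -> X x0 -> dot d (w - x0) <= maxgap X d w.
Proof.
move=> h X0; apply: ub_le_sup; last by exists x0.
by exists b => r [x Xx <-]; apply: h.
Qed.

Lemma diam_ge {R : realType} {n : nat} (X : set 'rV[R]_n) x y :
  compact X -> X x -> X y -> enorm (x - y) <= diam X.
Proof.
move=> cX Xx Xy.
have [M [_ HM]] := compact_bounded cX.
have HM1 := HM (M+1) ltac:(by rewrite ltrDl).
have cb : forall z, X z -> forall i, `|z ord0 i| <= M + 1.
  move=> z Xz i; apply: le_trans (HM1 z Xz).
  rewrite [X in _ <= X]mx_normrE; exact: (le_bigmax _ _ (ord0, i)).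
apply: ub_le_sup; last by exists x, y.
exists (Num.sqrt (n%:R * (2 * (M + 1)) ^+ 2)) => r [a [b [Xa Xb ->]]].
rewrite /enorm ler_sqrt; last by apply: mulr_ge0 => //; apply: sqr_ge0.
have -> : n%:R * (2 * (M + 1)) ^+ 2 = \sum_(i < n) (2 * (M + 1)) ^+ 2.
  by rewrite sumr_const card_ord mulr_natl.
apply: ler_sum => i _; rewrite -expr2 -real_normK ?num_real //.
apply: lerXn2r; rewrite ?nnegrE //.
  by apply: mulr_ge0 => //; apply: le_trans (normr_ge0 _) (cb _ Xa i).
rewrite !mxE; apply: le_trans (ler_normB _ _) _.
by rewrite mulr2n mulrDl mul1r lerD // cb.
Qed.

Lemma acg_bigmin_le (R : realType) (F : nat -> R) x0 a b j :
  (a <= j < b)%N -> \big[Num.min/x0]_(a <= i < b) F i <= F j.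
Proof.
move=> /andP [aj jb].
have -> : b = (a + (b - a))%N by rewrite subnKC // (leq_trans aj (ltnW jb)).
have : (j < a + (b - a))%N by rewrite subnKC // (leq_trans aj (ltnW jb)).
move: (b - a)%N => k; clear jb; elim: k a aj => [|k IH] a aj; first by rewrite addn0 => ja; rewrite ltnNge aj in ja.
move=> jk; rewrite big_ltn ?addnS ?ltnS ?leq_addr // ge_min.
case: (ltngtP a j) aj => // [aj _|<- _]; last by rewrite lexx.
apply/orP; right; rewrite -addSn; apply: IH => //. by rewrite addSn -addnS.
Qed.

Lemma acg_bigmin_mono (R : realType) (F H : nat -> R) x0 y0 a b :
  x0 <= y0 -> (forall i, (a <= i < b)%N -> F i <= H i) ->
  \big[Num.min/x0]_(a <= i < b) F i <= \big[Num.min/y0]_(a <= i < b) H i.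
Proof.
move=> xy FH; case: (leqP a b) => ab; last by rewrite !big_geq // ltnW.
move: FH; have -> : b = (a + (b - a))%N by rewrite subnKC.
move: (b - a)%N => k; clear ab; elim: k a => [|k IH] a FH; first by rewrite addn0 !big_geq.
have hlt : (a < a + k.+1)%N by rewrite addnS ltnS leq_addr.
rewrite (big_ltn hlt) (big_ltn hlt) le_min !ge_min.
have e : (a + k.+1 = a.+1 + k)%N by rewrite addSnnS.
have -> : F a <= H a by apply: FH; rewrite leqnn hlt.
rewrite /= e IH ?orbT //.
by move=> i /andP [ai ib]; apply: FH; rewrite e (ltnW ai) ib.
Qed.


Lemma conv_in {R : realType} {n : nat} {X : set 'rV[R]_n} {p v : 'rV[R]_n} {a : R} :
  convex_set X -> X p -> X v -> 0 <= a -> a <= 1 -> X ((1 - a) *: p + a *: v).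
Proof.
move=> cX Xp Xv a0 a1.
have := cX v p (Itv01 a0 a1) (mem_set Xv) (mem_set Xp).
rewrite inE; congr X; rewrite addrC. reflexivity.
Qed.

Lemma core1 (R : realType) (J h h' gp C s : R) : 1 <= J -> 0 <= C -> 0 <= s ->
  h <= h' - 2 / (J + 1) * gp + 2 * C / (J + 1) ^+ 2 ->
  h' - s * C / J <= gp -> h' <= 2 * (s + 1) * C / J ->
  h <= 2 * (s + 1) * C / (J + 1).
Proof.
move=> J1 C0 s0 A B IH.
have J0 : J != 0 by apply/eqP => J2; rewrite J2 in J1; lra.
have J10 : J + 1 != 0 by apply/eqP => J2; lra.
have q0 : 0 <= (J + 1)^-1 by rewrite invr_ge0; lra.
have g1 : 2 / (J + 1) <= 1 by rewrite ler_pdivrMr; lra.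
have P1 := ler_wpM2l (mulr_ge0 (ler0n _ 2) q0) B.
have P2 : (1 - 2 / (J + 1)) * h' <= (1 - 2 / (J + 1)) * (2 * (s + 1) * C / J).
  by apply: ler_wpM2l => //; lra.
have id : (1 - 2 / (J + 1)) * (2 * (s + 1) * C / J) + 2 / (J+1) * (s * C / J)
   + 2 * C / (J + 1) ^+ 2 = 2 * (s + 1) * C / (J + 1) - 2 * C / (J * (J + 1) ^+ 2).
  by field; rewrite J0 J10.
have nn : 0 <= 2 * C / (J * (J + 1) ^+ 2).
  by apply: divr_ge0; [lra| apply: mulr_ge0; [lra| apply: sqr_ge0]].
lra.
Qed.

Lemma core0 {R : realType} (h h' gp C s : R) : 0 <= C ->
  h <= h' - 2 / (1 + 1) * gp + 2 * C / (1 + 1) ^+ 2 ->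
  h' - s * C / 1 <= gp -> h <= 2 * (s + 1) * C / (1 + 1).
Proof.
move=> C0; have -> : 2 / (1 + 1) = 1 :> R by field.
have -> : 2 * C / (1 + 1) ^+ 2 = C / 2 :> R by field.
have -> : 2 * (s + 1) * C / (1 + 1) = s * C + C :> R by field.
rewrite divr1; lra.
Qed.

Lemma rec_bound (R : realType) (h gp : nat -> R) (t : nat) (C s : R) :
  0 <= C -> 0 <= s ->
  (forall j, (0 < j <= t)%N -> h j <= h j.-1 - 2 / (j%:R + 1) * gp j + 2 * C / (j%:R + 1) ^+ 2) ->
  (forall j, (0 < j <= t)%N -> h j.-1 - s * C / j%:R <= gp j) ->
  forall j, (0 < j <= t)%N -> h j <= 2 * (s + 1) * C / (j%:R + 1).
Proof.
move=> C0 s0 A B; elim=> [//|j IH] /andP [_ jt].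
have jt' : (0 < j.+1 <= t)%N by rewrite jt.
case: j IH jt jt' => [|j] IH jt jt'.
  move: (A 1%N jt') (B 1%N jt'); rewrite /= => A1 B1; exact: core0 C0 A1 B1.
apply: (@core1 R j.+2%:R (h j.+2) (h j.+1) (gp j.+2)) => //.
- by rewrite ler1n.
- exact: A jt'.
- exact: B jt'.
- have -> : j.+2%:R = j.+1%:R + 1 :> R by rewrite natr1.
  by apply: IH; rewrite /= ltnW.
Qed.

Lemma core2 {R : realType} (J T h h' gp C s M : R) : 1 <= J -> J <= T -> 0 <= C -> 0 <= s -> 0 <= M ->
  h <= h' - 2 / (J + 1) * gp + 2 * C / (J + 1) ^+ 2 ->
  M - s * C / J < gp ->
  h < h' - 2 * M / (T + 1) + 2 * (s + 1) * C * (1 / J - 1 / (J + 1)).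
Proof.
move=> J1 JT C0 s0 M0 A B.
have J0 : J != 0 by apply/eqP => J2; rewrite J2 in J1; lra.
have J10 : J + 1 != 0 by apply/eqP => J2; lra.
have q0 : 0 < 2 / (J + 1) by apply: divr_gt0; lra.
have P2 : 2 * M / (T + 1) <= 2 / (J + 1) * M.
  rewrite [X in _ <= X]mulrAC; apply: ler_wpM2l; first lra.
  rewrite lef_pV2 ?posrE; lra.
have id : 2 * (s + 1) * C * (1 / J - 1 / (J + 1)) - 2 / (J + 1) * (s * C / J)
   - 2 * C / (J + 1) ^+ 2 = 2 * C / (J * (J + 1) ^+ 2).
  by field; rewrite J0 J10.
have nn : 0 <= 2 * C / (J * (J + 1) ^+ 2).
  by apply: divr_ge0; [lra| apply: mulr_ge0; [lra| apply: sqr_ge0]].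
have : 2 / (J + 1) * (M - s * C / J) < 2 / (J + 1) * gp by rewrite ltr_pM2l.
move=> P3.
lra.
Qed.

Lemma tele (R : realType) (h gp : nat -> R) (t k : nat) (C s M : R) :
  0 <= C -> 0 <= s -> 0 <= M -> (1 <= k)%N ->
  (forall j, (k < j <= t)%N -> h j <= h j.-1 - 2 / (j%:R + 1) * gp j + 2 * C / (j%:R + 1) ^+ 2) ->
  (forall j, (k < j <= t)%N -> M - s * C / j%:R < gp j) ->
  forall m, (0 < m)%N -> (k + m <= t)%N ->
  h (k + m)%N < h k - 2 * M * m%:R / (t%:R + 1)
     + 2 * (s + 1) * C * (1 / (k%:R + 1) - 1 / ((k + m)%:R + 1)).
Proof.
move=> C0 s0 M0 k1 A B; elim=> [//|m IH] _ km.
have jr : (k < (k + m).+1 <= t)%N by rewrite ltnS leq_addr -addnS km.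
have J1 : 1 <= (k + m).+1%:R :> R by rewrite ler1n.
have JT : (k + m).+1%:R <= t%:R :> R by rewrite ler_nat -addnS.
have H := @core2 R _ _ _ _ _ _ _ _ J1 JT C0 s0 M0 (A _ jr) (B _ jr).
rewrite /= in H; rewrite addnS.
have e1 : (k + m).+1%:R = (k + m)%:R + 1 :> R by rewrite natr1.
have e2 : m.+1%:R = m%:R + 1 :> R by rewrite natr1.
rewrite e1 e2 in H *.
case: m IH km jr H J1 JT e1 e2 => [|m] IH km jr H J1 JT e1 e2.
  rewrite !addn0 mulr0n in H *; lra.
have km' : (k + m.+1 <= t)%N by apply: leq_trans km; rewrite leq_add2l.
have IH' := IH isT km'.
lra.
Qed.

Lemma fin1 (R : realType) (T K a C : R) : 2 <= T -> (K = (T + 1) / 2 \/ K = (T + 2) / 2) ->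
  0 <= a -> 0 <= C ->
  2 * a * C / K - 2 * (6 * a * C / T) * (T - K + 1) / (T + 1) + 2 * a * C * (1 / K - 1 / (T + 1)) <= 0.
Proof.
move=> T2 [->|->] a0 C0.
- have T0 : T != 0 by apply/eqP => e; lra.
  have T1 : T + 1 != 0 by apply/eqP => e; lra.
  have T1' : T + 1 != 0 by apply/eqP => e; lra.
  have -> : 2 * a * C / ((T + 1) / 2) - 2 * (6 * a * C / T) * (T - (T + 1) / 2 + 1) / (T + 1) +
     2 * a * C * (1 / ((T + 1) / 2) - 1 / (T + 1)) = - (6 * (a * C) / (T * (T + 1))).
    by field; rewrite T0 T1.
  rewrite oppr_le0; apply: divr_ge0; first by apply: mulr_ge0 => //; apply: mulr_ge0.
  apply: mulr_ge0; lra.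
- have T0 : T != 0 by apply/eqP => e; lra.
  have T1 : T + 1 != 0 by apply/eqP => e; lra.
  have T2' : T + 2 != 0 by apply/eqP => e; lra.
  have -> : 2 * a * C / ((T + 2) / 2) - 2 * (6 * a * C / T) * (T - (T + 2) / 2 + 1) / (T + 1) +
     2 * a * C * (1 / ((T + 2) / 2) - 1 / (T + 1)) = - (8 * (a * C) / ((T + 1) * (T + 2))).
    by field; rewrite T0 T1 T2'.
  rewrite oppr_le0; apply: divr_ge0; first by apply: mulr_ge0 => //; apply: mulr_ge0.
  apply: mulr_ge0; lra.
Qed.

Lemma fin2 (R : realType) (T K a C eta : R) : 2 <= T -> (K = (T + 1) / 2 \/ K = (T + 2) / 2) ->
  1 <= a -> 0 <= C -> 0 < eta -> (7 * a - 1) * C <= eta * (T - 1) ->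
  2 * a * C / K - 2 * eta * (T - K + 1) / (T + 1) + 2 * a * C * (1 / K - 1 / (T + 1)) < 0.
Proof.
move=> T2 [->|->] a1 C0 e0 H.
- have T1 : T + 1 != 0 by apply/eqP => e; lra.
  have -> : 2 * a * C / ((T + 1) / 2) - 2 * eta * (T - (T + 1) / 2 + 1) / (T + 1) +
     2 * a * C * (1 / ((T + 1) / 2) - 1 / (T + 1)) = (6 * a * C - eta * (T + 1)) / (T + 1).
    by field; rewrite T1.
  rewrite ltr_pdivrMr ?mul0r; last lra.
  have : 0 <= (a - 1) * C by apply: mulr_ge0; lra.
  nra.
- have T1 : T + 1 != 0 by apply/eqP => e; lra.
  have T2' : T + 2 != 0 by apply/eqP => e; lra.
  have -> : 2 * a * C / ((T + 2) / 2) - 2 * eta * (T - (T + 2) / 2 + 1) / (T + 1) +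
     2 * a * C * (1 / ((T + 2) / 2) - 1 / (T + 1)) =
     (6 * a * C * T + 4 * a * C - eta * T * (T + 2)) / ((T + 1) * (T + 2)).
    by field; rewrite T1 T2'.
  rewrite ltr_pdivrMr ?mul0r; last by apply: mulr_gt0; lra.
  have h1 : 6 * a * C <= eta * (T - 1).
    have : 0 <= (a - 1) * C by apply: mulr_ge0; lra.
    lra.
  have h2 : 0 <= (eta * (T - 1) - 6 * a * C) * (T + 2 / 3).
    by apply: mulr_ge0; lra.
  nra.
Qed.

Lemma core_t1 {R : realType} (p0 p1 px gp G de dd C s b D o : R) : o = 1 -> 0 <= C -> 0 <= s ->
  C = b * D ^+ 2 ->
  p1 <= p0 - 2 / (o + 1) * gp + 2 * C / (o + 1) ^+ 2 -> p0 - px <= G -> G <= gp + de ->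
  de = s * C / o -> b / 2 * dd <= b / 2 * D ^+ 2 ->
  p1 - px + b / 2 * dd <= 6 * (s + 1) * C / o.
Proof.
move=> -> C0 s0 CE st hc gb de1 hd.
rewrite divr1 in de1 *.
have e1 : 2 / (1 + 1) = 1 :> R by field.
have e2 : 2 * C / (1 + 1) ^+ 2 = C / 2 :> R by field.
have e3 : b / 2 * D ^+ 2 = C / 2 :> R by rewrite CE; field.
rewrite e1 e2 in st; rewrite e3 in hd.
have : 0 <= s * C by apply: mulr_ge0.
lra.
Qed.

Theorem mainTheorem2 (R : realType) (n : nat) (X : set 'rV[R]_n)
  (u g : 'rV[R]_n) (beta eta : R)
  (de al : nat -> R) (uu vv : nat -> 'rV[R]_n) :
  X !=set0 -> compact X -> convex_set X -> X u ->
  0 < beta -> 0 < eta ->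
  acgm_run X u g beta eta de al uu vv ->
  (* termination guarantee: output u^+ = u^{t-1} *)
  (forall t, acgm_reached u g beta eta de uu vv t ->
     acgm_stops u g beta eta de uu vv t ->
     maxgap X (gradphi u g beta (uu t.-1)) (uu t.-1) <= eta)
  /\
  (forall sigma : R, 0 <= sigma ->
     (forall t, (1 <= t)%N -> de t = sigma * beta * diam X ^+ 2 / t%:R) ->
     (forall t, acgm_reached u g beta eta de uu vv t ->
        ~ acgm_stops u g beta eta de uu vv t ->
        phi u g beta (uu t) <=
        phi u g beta ((t.-1%:R / t.+1%:R) *: uu t.-1 + (2 / t.+1%:R) *: vv t)) ->
     (forall t, (1 <= t)%N -> acgm_reached u g beta eta de uu vv t.+1 ->
        \big[Num.min/acgm_gap u g beta uu vv 1%N]_(1 <= j < t.+2)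
           acgm_gap u g beta uu vv j
        <= \big[Num.min/maxgap X (gradphi u g beta (uu 0%N)) (uu 0%N)]_(1 <= j < t.+2)
             maxgap X (gradphi u g beta (uu j.-1)) (uu j.-1)
        /\
        \big[Num.min/maxgap X (gradphi u g beta (uu 0%N)) (uu 0%N)]_(1 <= j < t.+2)
             maxgap X (gradphi u g beta (uu j.-1)) (uu j.-1)
        <= 6 * (sigma + 1) * beta * diam X ^+ 2 / t%:R)
     /\
     exists t : nat,
       [/\ (1 <= t)%N,
           t%:R <= 1 + (Num.ceil ((7 * sigma + 6) * beta * diam X ^+ 2 / eta))%:~R :> R,
           acgm_reached u g beta eta de uu vv t
         & acgm_stops u g beta eta de uu vv t]).
Proof.
move=> Xne cX cvX Xu b0 e0 [Hu0 Hde Hv Hal].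
have reach_le : forall t s, acgm_reached u g beta eta de uu vv t -> (1 <= s)%N -> (s <= t)%N ->
    acgm_reached u g beta eta de uu vv s.
  move=> t s [_ Ht] s1 st; split => // s' s'1 s's; apply: Ht => //; exact: leq_trans s's st.
have Gle : forall j, acgm_reached u g beta eta de uu vv j -> forall x, X x ->
    dot (gradphi u g beta (uu j.-1)) (uu j.-1 - x) <= acgm_gap u g beta uu vv j + de j.
  move=> j Rj x Xx; rewrite (@dot_split R n _ _ (vv j) _); have [_ H] := Hv j Rj.
  by rewrite /acgm_gap lerD2l; apply: H.
have GleB : forall j, acgm_reached u g beta eta de uu vv j ->
    maxgap X (gradphi u g beta (uu j.-1)) (uu j.-1) <= acgm_gap u g beta uu vv j + de j.
  by move=> j Rj; apply: maxgap_le Xne (Gle j Rj).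
have Gge : forall j x, acgm_reached u g beta eta de uu vv j -> X x ->
    dot (gradphi u g beta (uu j.-1)) (uu j.-1 - x) <= maxgap X (gradphi u g beta (uu j.-1)) (uu j.-1).
  by move=> j x Rj Xx; apply: maxgap_ge (Gle j Rj) Xx.
split.
  move=> t Rt St; apply: maxgap_le Xne _ => x Xx.
  have := Gle t Rt x Xx; move: St; rewrite /acgm_stops; lra.
move=> sig sig0 Hde' Hphi.
set D := diam X; set C := beta * D ^+ 2.
have C0 : 0 <= C by apply: mulr_ge0; [exact: ltW | exact: sqr_ge0].
have HD2 : forall x y, X x -> X y -> dot (x - y) (x - y) <= D ^+ 2.
  move=> x y Xx Xy; rewrite -enorm_sq; have := @diam_ge _ _ X x y cX Xx Xy.
  have := enorm_ge0 (x - y); rewrite /D; nra.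
have deE : forall j, (1 <= j)%N -> de j = sig * C / j%:R.
  by move=> j j1; rewrite Hde' // /C mulrA.
have HC : forall j x, acgm_reached u g beta eta de uu vv j -> X x ->
    phi u g beta (uu j.-1) - phi u g beta x <= maxgap X (gradphi u g beta (uu j.-1)) (uu j.-1).
  move=> j x Rj Xx; apply: le_trans (Gge j x Rj Xx); rewrite Qid.
  have : 0 <= beta / 2 * dot (x - uu j.-1) (x - uu j.-1).
    by apply: mulr_ge0; [apply: divr_ge0; lra | exact: dot_ge0].
  lra.
have inX : forall t, (forall s, (0 < s <= t)%N -> acgm_reached u g beta eta de uu vv s /\ ~ acgm_stops u g beta eta de uu vv s) -> forall j, (j <= t)%N -> X (uu j).
  move=> t ok; elim=> [|j IH] jt; first by rewrite Hu0.
  have [Rj Sj] := ok j.+1 jt.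
  have [a0 a1 ->] := Hal _ Rj Sj.
  exact: conv_in cvX (IH (ltnW jt)) (Hv _ Rj).1 a0 a1.
have step0 : forall j, (1 <= j)%N -> acgm_reached u g beta eta de uu vv j ->
    ~ acgm_stops u g beta eta de uu vv j -> X (uu j.-1) ->
    phi u g beta (uu j) <= phi u g beta (uu j.-1) - 2 / (j%:R + 1) * acgm_gap u g beta uu vv j
      + 2 * C / (j%:R + 1) ^+ 2.
  move=> [//|j] _ Rj Sj Xp; apply: le_trans (Hphi _ Rj Sj) _.
  have e1 : j.+2%:R = j.+1%:R + 1 :> R by rewrite natr1.
  have e2 : j.+1%:R = j%:R + 1 :> R by rewrite natr1.
  have j0 : j%:R + 1 + 1 != 0 :> R by apply/eqP => e; have := ler0n R j; lra.
  rewrite (@phi_step R n u g beta _ (2 / j.+2%:R)); last by rewrite /= e1 e2; field.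
  rewrite /= e1 /acgm_gap /=.
  have Hd := HD2 _ _ (Hv _ Rj).1 Xp.
  have -> : 2 * C / (j.+1%:R + 1) ^+ 2 = beta / 2 * (2 / (j.+1%:R + 1)) ^+ 2 * D ^+ 2.
    by rewrite /C e2; field.
  rewrite lerD2l; apply: ler_wpM2l => //.
  by apply: mulr_ge0; [apply: divr_ge0; lra | exact: sqr_ge0].
have key : forall t M, (2 <= t)%N ->
    (forall s, (0 < s <= t)%N -> acgm_reached u g beta eta de uu vv s /\ ~ acgm_stops u g beta eta de uu vv s) ->
    0 <= M ->
    (forall j, (t./2 < j <= t)%N -> M - sig * C / j%:R < acgm_gap u g beta uu vv j) ->
    exists K : R, (K = (t%:R + 1) / 2 \/ K = (t%:R + 2) / 2) /\
     0 < 2 * (sig + 1) * C / K - 2 * M * (t%:R - K + 1) / (t%:R + 1)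
         + 2 * (sig + 1) * C * (1 / K - 1 / (t%:R + 1)).
  move=> t M t2 ok M0 Hs.
  have Xt := inX t ok t (leqnn t).
  pose h j := phi u g beta (uu j) - phi u g beta (uu t).
  have A : forall j, (0 < j <= t)%N -> h j <= h j.-1 - 2 / (j%:R + 1) * acgm_gap u g beta uu vv j
      + 2 * C / (j%:R + 1) ^+ 2.
    move=> j jr; have [Rj Sj] := ok j jr; move/andP: jr => [j1 jt].
    have := step0 j j1 Rj Sj (inX t ok j.-1 (leq_trans (leq_pred j) jt)).
    rewrite /h; lra.
  have B : forall j, (0 < j <= t)%N -> h j.-1 - sig * C / j%:R <= acgm_gap u g beta uu vv j.
    move=> j jr; have [Rj _] := ok j jr; move/andP: jr => [j1 jt].
    have := HC j (uu t) Rj Xt; have := GleB j Rj; rewrite deE // /h; lra.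
  have par : (t./2 * 2 = t \/ t./2 * 2 = t.-1)%N.
    have := odd_double_half t; rewrite -muln2; case: (odd t) => /=; lia.
  have k1 : (1 <= t./2)%N by case: par; lia.
  have kt : (t./2 < t)%N by case: par; lia.
  have hk := @rec_bound R h (acgm_gap u g beta uu vv) t C sig C0 sig0 A B t./2
    ltac:(by rewrite k1 ltnW).
  have A' : forall j, (t./2 < j <= t)%N -> h j <= h j.-1 - 2 / (j%:R + 1) * acgm_gap u g beta uu vv j
      + 2 * C / (j%:R + 1) ^+ 2.
    move=> j /andP [kj jt]; apply: A; rewrite jt andbT; exact: leq_ltn_trans kj.
  have tl := @tele R h (acgm_gap u g beta uu vv) t t./2 C sig M C0 sig0 M0 k1 A' Hs (t - t./2)
    ltac:(by rewrite subn_gt0) ltac:(by rewrite subnKC // ltnW).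
  rewrite subnKC ?(ltnW kt) // /h subrr natrB ?(ltnW kt) // in tl.
  exists (t./2%:R + 1); split.
    case: par => e; [right|left].
    + have : (t./2 * 2)%:R = t%:R :> R by rewrite e.
      rewrite natrM; lra.
    + have : (t./2 * 2).+1%:R = t%:R :> R by rewrite e prednK // ltnW // (leq_trans _ t2).
      rewrite -natr1 natrM; lra.
  rewrite /h in hk; lra.
split.
  move=> t t1 Rt1.
  have ok : forall s, (0 < s <= t)%N -> acgm_reached u g beta eta de uu vv s /\ ~ acgm_stops u g beta eta de uu vv s.
    move=> s /andP [s1 st]; split; first exact: reach_le Rt1 s1 (leqW st).
    by apply: Rt1.2.
  have Rj : forall j, (0 < j <= t.+1)%N -> acgm_reached u g beta eta de uu vv j.
    by move=> j /andP [j1 jt]; apply: reach_le Rt1 j1 jt.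
  split.
    apply: acg_bigmin_mono.
      have R1 := Rj 1%N isT; exact: Gge 1%N (vv 1%N) R1 (Hv _ R1).1.
    move=> i /andP [i1 it]; have Ri := Rj i ltac:(by rewrite i1).
    exact: Gge i (vv i) Ri (Hv _ Ri).1.
  have -> : 6 * (sig + 1) * beta * diam X ^+ 2 / t%:R = 6 * (sig + 1) * C / t%:R.
    by rewrite /C /D !mulrA.
  have [t1'|t2] := leqP t 1.
    have e : t = 1%N by apply/eqP; rewrite eqn_leq t1' t1.
    subst t.
    have bm := @acg_bigmin_le R (fun j => maxgap X (gradphi u g beta (uu j.-1)) (uu j.-1))
      (maxgap X (gradphi u g beta (uu 0%N)) (uu 0%N)) 1 3 2 isT.
    apply: le_trans bm _.
    have R1 := Rj 1%N isT; have [R1' S1] := ok 1%N isT.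
    have Xu0 := inX 1%N ok 0%N isT; have Xu1 := inX 1%N ok 1%N isT.
    have st := step0 1%N isT R1' S1 Xu0.
    apply: (maxgap_le Xne) => x Xx /=; rewrite Qid.
    have hc := HC 1%N x R1 Xx; have gb := GleB 1%N R1; have de1 := deE 1%N isT.
    have hd := HD2 x (uu 1%N) Xx Xu1.
    have hd' : beta / 2 * dot (x - uu 1%N) (x - uu 1%N) <= beta / 2 * D ^+ 2.
      by apply: ler_wpM2l => //; apply: divr_ge0; lra.
    exact: (@core_t1 R _ _ _ _ _ _ _ _ _ _ _ _ (erefl : (1%:R : R) = 1) C0 sig0 (erefl : C = beta * D ^+ 2) st hc gb de1 hd').
  case: (pselect (exists j, (t./2 < j <= t)%N /\
     maxgap X (gradphi u g beta (uu j.-1)) (uu j.-1) <= 6 * (sig + 1) * C / t%:R)).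
    move=> [j [/andP [kj jt] GM]]; apply: le_trans GM.
    apply: (@acg_bigmin_le R (fun j => maxgap X (gradphi u g beta (uu j.-1)) (uu j.-1))
      (maxgap X (gradphi u g beta (uu 0%N)) (uu 0%N)) 1 t.+2 j); rewrite (leq_ltn_trans _ kj) //= ltnS ltnW //.
  move=> NE; exfalso.
  have M0 : 0 <= 6 * (sig + 1) * C / t%:R.
    by apply: divr_ge0 => //; apply: mulr_ge0 => //; lra.
  have Hs : forall j, (t./2 < j <= t)%N ->
      6 * (sig + 1) * C / t%:R - sig * C / j%:R < acgm_gap u g beta uu vv j.
    move=> j /andP [kj jt].
    have j1 : (0 < j)%N by apply: leq_ltn_trans kj.
    have Rj' := Rj j ltac:(by rewrite j1 ltnW).
    have : 6 * (sig + 1) * C / t%:R < maxgap X (gradphi u g beta (uu j.-1)) (uu j.-1).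
      by rewrite ltNge; apply/negP => h; apply: NE; exists j; rewrite kj jt.
    have := GleB j Rj'; rewrite deE //; lra.
  have [K [HK Hpos]] := key t _ t2 ok M0 Hs.
  have T2 : 2 <= t%:R :> R by rewrite ler_nat.
  have := @fin1 R t%:R K (sig + 1) C T2 HK ltac:(lra) C0.
  lra.
set c := Num.ceil ((7 * sig + 6) * beta * diam X ^+ 2 / eta).
have cx : (7 * sig + 6) * beta * diam X ^+ 2 / eta <= c%:~R by apply: ceil_ge.
have x0 : 0 <= (7 * sig + 6) * beta * diam X ^+ 2 / eta.
  apply: divr_ge0; last lra.
  by rewrite -mulrA; apply: mulr_ge0; [lra| exact: C0].
have c0 : 0 <= c by rewrite /c ceil_ge0; lra.
have cR0 : 0 <= c%:~R :> R by rewrite ler0z.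
have cR : (7 * sig + 6) * C <= eta * c%:~R.
  have e : (7 * sig + 6) * beta * D ^+ 2 = (7 * sig + 6) * C by rewrite /C mulrA.
  by move: cx; rewrite ler_pdivrMr // e [_%:~R * _]mulrC.
have o : 1%:R = 1 :> R by [].
have Xu0 : X (uu 0%N) by rewrite Hu0.
case: (eqVneq c 0) => [c00|cn0].
  have R1 : acgm_reached u g beta eta de uu vv 1%N.
    by split => // s s1 s1'; rewrite ltnNge s1 in s1'.
  exists 1%N; split => //; first by rewrite o; lra.
  rewrite /acgm_stops deE // o divr1.
  have Ce : C = 0.
    rewrite c00 mulr0z mulr0 in cR.
    have : 0 <= sig * C by apply: mulr_ge0.
    lra.
  have D0 : D ^+ 2 = 0.
    by move: Ce; rewrite /C => /eqP; rewrite mulf_eq0 => /orP [/eqP b00|/eqP //]; lra.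
  have Xv1 := (Hv 1%N R1).1.
  have := HD2 _ _ Xu0 Xv1; rewrite D0 => /(dot_zero (gradphi u g beta (uu 0%N))) h0.
  by rewrite /acgm_gap /= h0 Ce mulr0; lra.
have c1 : (0 < `|c|)%N by rewrite absz_gt0.
pose T := (`|c|).+1.
have Te : T%:R = 1 + c%:~R :> R by rewrite /T -natr1 natr_absz ger0_norm // addrC.
case: (pselect (exists t, [/\ (0 < t <= T)%N, acgm_reached u g beta eta de uu vv t
    & acgm_stops u g beta eta de uu vv t])).
  move=> [t [/andP [t1 tT] Rt St]]; exists t; split => //.
  by rewrite -Te ler_nat.
move=> NE; exfalso.
have RA : forall s, (0 < s <= T)%N -> acgm_reached u g beta eta de uu vv s.
  elim=> [//|s IH] /andP [_ sT].
  case: s IH sT => [|s] IH sT.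
    by split => // s' s'1 s'2; rewrite ltnNge s'1 in s'2.
  have Rs := IH ltac:(by rewrite /= (ltnW sT)).
  split => // s' s'1 s's.
  move: s's; rewrite ltnS leq_eqVlt => /orP [/eqP ->|s'l].
    by move=> St; apply: NE; exists s.+1; split => //; rewrite /= ltnW.
  exact: Rs.2 s' s'1 s'l.
have ok : forall s, (0 < s <= T)%N -> acgm_reached u g beta eta de uu vv s /\ ~ acgm_stops u g beta eta de uu vv s.
  move=> s sr; split; first exact: RA.
  by move=> St; apply: NE; exists s; split => //; apply: RA.
have T2 : (2 <= T)%N by rewrite /T ltnS.
have Hs : forall j, (T./2 < j <= T)%N -> eta - sig * C / j%:R < acgm_gap u g beta uu vv j.
  move=> j /andP [kj jt].
  have j1 : (0 < j)%N by apply: leq_ltn_trans kj.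
  have [_ Sj] := ok j ltac:(by rewrite j1).
  rewrite -deE //; rewrite ltNge; apply/negP => h; exact: Sj h.
have [K [HK Hpos]] := key T eta T2 ok (ltW e0) Hs.
have T2R : 2 <= T%:R :> R by rewrite ler_nat.
have H7 : (7 * (sig + 1) - 1) * C <= eta * (T%:R - 1).
  rewrite Te; lra.
have := @fin2 R T%:R K (sig + 1) C eta T2R HK ltac:(lra) C0 e0 H7.
lra.
Qed.
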